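(* Let $f:S^1\to S^1$ be a Denjoy homeomorphism as described in the context, $\Delta$ the partition of $S^1$ into $f$-orbits, $Y=S^1/\Delta$ with the quotient topology, and $p:S^1\to Y$ the projection. Then $p$ has property (CONT) but does not have property (COMP).
   Context: A Denjoy homeomorphism here is an orientation preserving homeomorphism $f:S^1\to S^1$ with irrational rotation number such that (i) there is a nowhere dense Cantor set $\Gamma\subset S^1$ with $f(\Gamma)=\Gamma$ and the orbit $\{f^k(x):k\in\mathbb{Z}\}$ of every $x\in\Gamma$ is dense in $\Gamma$; (ii) there is an open arc $J_0\subset S^1$ such that $S^1\setminus\Gamma=\bigsqcup_{m\in\mathbb{Z}} f^m(J_0)$ (disjoint union). A $\Delta$-map is a continuous $h:S^1\to S^1$ mapping each element of $\Delta$ into some element of $\Delta$; $\mathrm{End}(S^1,\Delta)$ is the monoid of $\Delta$-maps, $\mathrm{End}(Y)=C(Y,Y)$, and $\psi(h)$ is the unique map with $p\circ h=\psi(h)\circ p$. Property (COMP): for every compact $L\subset Y$ there is a compact $K\subset S^1$ with $p(K)=L$. Property (CONT): $\psi:\mathrm{End}(S^1,\Delta)\to\mathrm{End}(Y)$ is continuous with respect to compact open topologies (generated by subbasic sets $\{g: g(K)\subset U\}$, $K$ compact, $U$ open). *)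

(* Defs.v *)
From HB Require Import structures.
From mathcomp Require Import all_boot all_order all_algebra generic_quotient.
From mathcomp Require Import all_classical all_reals all_analysis.
Import numFieldNormedType.Exports.
Set Implicit Arguments. Unset Strict Implicit. Unset Printing Implicit Defensive.
Import Order.TTheory GRing.Theory Num.Theory.
Local Open Scope classical_set_scope.
Local Open Scope ring_scope.
Local Open Scope quotient_scope.

Section circle.
Variable R : realType.
Definition zrel : rel R := fun x y => (x - y) \is a Num.int.
Lemma zrel_refl : reflexive zrel. Proof. by move=> x; rewrite /zrel subrr rpred0. Qed.
Lemma zrel_sym : symmetric zrel.
Proof. by move=> x y; rewrite /zrel -opprB rpredN. Qed.
Lemma zrel_trans : transitive zrel.
Proof. by move=> y x z h1 h2; rewrite /zrel -(subrKA y) addrC; apply: rpredD. Qed.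
Definition zrel_equiv := EquivRel zrel zrel_refl zrel_sym zrel_trans.
Definition circle := {eq_quot zrel_equiv}.
HB.instance Definition _ := Topological.copy circle (quotient_topology circle).
HB.instance Definition _ := Quotient.on circle.
Definition cover : R -> circle := \pi_circle.
End circle.
Arguments cover {R}.

Section circle_maps.
Variable R : realType.
Local Notation S1 := (circle R).
Implicit Types (f : S1 -> S1) (F : R -> R).

Definition homeomorphism {X Y : topologicalType} (f : X -> Y) :=
  exists g : Y -> X, [/\ cancel f g, cancel g f, continuous f & continuous g].

Definition is_lift f F := continuous F /\ forall t, f (cover t) = cover (F t).

Definition orientation_preserving_homeo f :=
  homeomorphism f /\ exists F, is_lift f F /\ {homo F : x y / x < y}.

Definition irrational (x : R) := ~ exists q : rat, x = ratr q.

Definition irrational_rotation_number f :=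
  exists F (rho : R), [/\ is_lift f F,
    (forall x, (fun n : nat => (iter n F x - x) / n%:R) @ \oo --> rho)
    & irrational rho].

(** f^m (A) for m in Z (for bijective f, f^(-n)(A) is the preimage of A under f^n) *)
Definition zimage f (m : int) (A : set S1) : set S1 :=
  match m with
  | Posz n => iter n f @` A
  | Negz n => iter n.+1 f @^-1` A
  end.

Definition zorbit f (x : S1) : set S1 :=
  \bigcup_(k in [set: int]) zimage f k [set x].

Definition open_arc (J : set S1) :=
  exists a b : R, [/\ a < b, b - a <= 1 & J = cover @` `]a, b[ ].

Definition cantor_set {X : topologicalType} (C : set X) :=
  [/\ C !=set0, compact C, perfect_set C & totally_disconnected C].

Definition nowhere_dense {X : topologicalType} (A : set X) :=
  interior (closure A) = set0.

Definition denjoy f :=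
  [/\ orientation_preserving_homeo f, irrational_rotation_number f
    & (exists Gamma : set S1,
      [/\ cantor_set Gamma, nowhere_dense Gamma, f @` Gamma = Gamma,
        (forall x, Gamma x -> Gamma `<=` closure (zorbit f x)) &
        exists J0 : set S1, [/\ open_arc J0,
          ~` Gamma = \bigcup_(m in [set: int]) zimage f m J0 &
          forall m n : int, m != n -> zimage f m J0 `&` zimage f n J0 = set0]])].
End circle_maps.

Section orbit_quotient.
Variable R : realType.
Local Notation S1 := (circle R).
Variable f : S1 -> S1.

(** x ~ y iff f^m x = f^n y for some m n : nat; for a bijection f this says
    exactly that x and y lie in the same Z-orbit *)
Definition orbit_rel : rel S1 :=
  fun x y => `[< exists m n : nat, iter m f x = iter n f y >].

Lemma orbit_rel_refl : reflexive orbit_rel.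
Proof. by move=> x; apply/asboolP; exists 0%N, 0%N. Qed.
Lemma orbit_rel_sym : symmetric orbit_rel.
Proof.
move=> x y; apply/asboolP/asboolP => -[m [n e]]; by exists n, m.
Qed.
Lemma orbit_rel_trans : transitive orbit_rel.
Proof.
move=> y x z /asboolP [m [n e1]] /asboolP [a [b e2]]; apply/asboolP.
exists (a + m)%N, (b + n)%N.
by rewrite !iterD e1 -!iterD addnC iterD e2 -iterD addnC.
Qed.
Definition orbit_equiv := EquivRel orbit_rel orbit_rel_refl orbit_rel_sym orbit_rel_trans.
Definition orbit_space := {eq_quot orbit_equiv}.
HB.instance Definition _ := Topological.copy orbit_space (quotient_topology orbit_space).
HB.instance Definition _ := Quotient.on orbit_space.

Local Notation Y := orbit_space.
Definition proj : S1 -> Y := \pi_Y.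

Definition delta_maps : set {compact-open, S1 -> S1} :=
  [set h | continuous h /\ forall x y, orbit_rel x y -> orbit_rel (h x) (h y)].

(** psi(h): the unique map with p \o h = psi(h) \o p *)
Definition psi (h : S1 -> S1) : Y -> Y := fun y => proj (h (repr y)).

Definition End_delta := set_type delta_maps.

Definition psi_map (h : End_delta) : {compact-open, Y -> Y} := psi (set_val h).

Definition prop_CONT :=
  (forall h : End_delta, continuous (psi (set_val h))) /\ continuous psi_map.

Definition prop_COMP :=
  forall L : set Y, compact L -> exists K : set S1, compact K /\ proj @` K = L.
End orbit_quotient.

(* Main.v *)
Require Import Defs.
From HB Require Import structures.
From mathcomp Require Import all_boot all_order all_algebra generic_quotient.
From mathcomp Require Import all_classical all_reals all_analysis.
From mathcomp Require Import borel_hierarchy.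
From mathcomp Require Import lra zify.
Import numFieldNormedType.Exports.
Set Implicit Arguments. Unset Strict Implicit. Unset Printing Implicit Defensive.
Import Order.TTheory GRing.Theory Num.Theory.
Local Open Scope classical_set_scope.
Local Open Scope ring_scope.
Local Open Scope quotient_scope.

Section circ.
Variable R : realType.
Local Notation S1 := (circle R).
Local Notation cover := (@Defs.cover R).

Lemma cover_eq (x y : R) : cover x = cover y <-> (x - y) \is a Num.int.
Proof.
split => [h|h].
  by apply/(@eqmodP _ (zrel_equiv R)).
exact/(@eqmodP _ (zrel_equiv R)).
Qed.

Lemma cover_surj (z : S1) : exists x, cover x = z.
Proof. by exists (repr z); rewrite /Defs.cover reprK. Qed.

Lemma cover_cont : continuous (@Defs.cover R).
Proof. exact: pi_continuous. Qed.

Lemma open_coverE (U : set S1) : open U <-> open (cover @^-1` U).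
Proof. by []. Qed.

Lemma open_cover (A : set R) : open A -> open (cover @` A).
Proof.
move=> oA; apply/open_coverE.
rewrite openE => s [u Au /cover_eq hus].
have oP : open ((fun y => y + (u - s)) @^-1` A).
  apply: open_comp => //= y _; apply: cvgD; [exact: cvg_id | exact: cvg_cst].
rewrite /interior; apply: (@filterS _ _ _ ((fun y => y + (u - s)) @^-1` A)).
  move=> y /= Ay; exists (y + (u - s)) => //; apply/cover_eq.
  by rewrite [y + _]addrC addrK.
by move: oP; rewrite openE => /(_ s); apply; rewrite /= addrC subrK.
Qed.

Lemma int_small (x : R) : x \is a Num.int -> `|x| < 1 -> x = 0.
Proof.
move=> /intrP [m ->] h; apply/eqP; rewrite intr_eq0; apply/eqP.
rewrite -intr_norm ltrz1 in h.
by move: h; case: m => [[|n]|n] //.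
Qed.

Lemma circle_compact : compact [set: S1].
Proof.
have -> : [set: S1] = cover @` `[0, 1].
  apply/seteqP; split => // z _; have [x <-] := cover_surj z.
  exists (x - (Num.floor x)%:~R).
    rewrite /= in_itv /= subr_ge0 floor_le /= lerBlDl.
    by have /andP[_ /ltW] := floor_itv x; rewrite intrD addrC.
  by apply/cover_eq; rewrite addrAC subrr add0r rpredN intr_int.
apply: continuous_compact; last exact: segment_compact.
apply: continuous_subspaceT; exact: cover_cont.
Qed.

Lemma circle_hausdorff : hausdorff_space S1.
Proof.
rewrite open_hausdorff => x y xy.
have [u ux] := cover_surj x; have [v vy] := cover_surj y.
subst x y.
have wni : ~ ((u - v) \is a Num.int).
  by move=> h; move/eqP: xy; apply; apply/cover_eq.
set w := u - v in wni.
set fl := (Num.floor w)%:~R : R.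
have flw : fl <= w by exact: floor_le.
have flw1 : w < fl + 1 by have := floorD1_gt w; rewrite intrD.
have wfl : w != fl by apply/negP => /eqP h; apply: wni; rewrite h intr_int.
have r0 : fl < w by rewrite lt_neqAle eq_sym wfl flw.
set mn := Num.min (w - fl) (1 - (w - fl)).
have h1 : mn <= w - fl by rewrite /mn ge_min lexx.
have h2 : mn <= 1 - (w - fl) by rewrite /mn ge_min lexx orbT.
have mn0 : 0 < mn by rewrite /mn lt_min; apply/andP; split; lra.
exists (cover @` ball u (mn / 2), cover @` ball v (mn / 2)).
  split; rewrite inE; [exists u | exists v] => //; apply: ballxx; lra.
split; [exact/open_cover/ball_open | exact/open_cover/ball_open |].
apply/eqP; apply/seteqP; split => // z [[u' bu <-] [v' bv /cover_eq]] /=.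
move=> /intrP [m hm].
have hw : w = u - v by [].
move: bu bv; rewrite -!ball_normE /= => /ltr_normlP [bu1 bu2] /ltr_normlP [bv1 bv2].
have [j0|j0] := leP 0 (Num.floor w + m).
  have : 0 <= fl + m%:~R :> R by rewrite /fl -intrD ler0z.
  lra.
have : fl + m%:~R <= -1 :> R.
  have -> : (-1 : R) = (-1 : int)%:~R by rewrite intrN.
  rewrite /fl -intrD ler_int; lia.
lra.
Qed.
End circ.

Section dyn.
Variable R : realType.
Local Notation S1 := (circle R).
Local Notation cover := (@Defs.cover R).
Variables (f g : S1 -> S1).
Hypotheses (fK : cancel f g) (gK : cancel g f) (fc : continuous f) (gc : continuous g).

Lemma iter_cont (h : S1 -> S1) n : continuous h -> continuous (iter n h).
Proof.
move=> hc; elim: n => [|n IH] x /=; first exact: cvg_id.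
exact: (continuous_comp (IH x) (hc _)).
Qed.

Lemma iterK n : cancel (iter n f) (iter n g).
Proof. by elim: n => [|n IH] x //; rewrite iterSr iterS fK IH. Qed.

Lemma iterKV n : cancel (iter n g) (iter n f).
Proof. by elim: n => [|n IH] x //; rewrite iterSr iterS gK IH. Qed.

Lemma iter_inj n : injective (iter n f).
Proof. exact: can_inj (iterK n). Qed.

Lemma image_iterE n (A : set S1) : iter n f @` A = iter n g @^-1` A.
Proof.
apply/seteqP; split => x /=; first by move=> [a Aa <-]; rewrite iterK.
by move=> Ax; exists (iter n g x) => //; rewrite iterKV.
Qed.

Lemma open_zimage (J : set S1) k : open J -> open (zimage f k J).
Proof.
move=> oJ; case: k => n /=.
  rewrite image_iterE; apply: open_comp => // x _; exact: iter_cont.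
by apply: open_comp => // x _; exact: iter_cont.
Qed.

Lemma orbitP x y : orbit_rel f x y <-> exists m n : nat, iter m f x = iter n f y.
Proof. by split => [/asboolP|h]; [|apply/asboolP]. Qed.

Variable Gamma : set S1.
Hypothesis fG : f @` Gamma = Gamma.

Lemma fG1 x : Gamma x -> Gamma (f x).
Proof. by move=> Gx; rewrite -fG; exists x. Qed.

Lemma fG2 x : Gamma (f x) -> Gamma x.
Proof. by rewrite -{1}fG => -[y Gy /(can_inj fK) <-]. Qed.

Lemma iterG n x : Gamma (iter n f x) <-> Gamma x.
Proof.
elim: n => [|n IH] //=; split => [/fG2/IH//|/IH/fG1//].
Qed.

Lemma orbit_gamma x y : orbit_rel f x y -> Gamma x -> Gamma y.
Proof. by move=> /orbitP [m [n e]] /(iterG m); rewrite e => /iterG. Qed.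


Variable J0 : set S1.
Hypothesis oJ0 : open J0.
Hypothesis hunion : ~` Gamma = \bigcup_(m in [set: int]) zimage f m J0.
Hypothesis hdisj : forall m n : int, m != n -> zimage f m J0 `&` zimage f n J0 = set0.
Hypothesis dens : forall x, Gamma x -> Gamma `<=` closure (zorbit f x).

Lemma J0G x : J0 x -> ~ Gamma x.
Proof.
move=> Jx; have : (~` Gamma) x.
  by rewrite hunion; exists 0 => //=; exists x.
by [].
Qed.

Lemma wand_J0 z : ~ Gamma z -> exists x, J0 x /\ orbit_rel f x z.
Proof.
move=> nGz; have : (~` Gamma) z by [].
rewrite hunion => -[[n|n] _ /=].
  by move=> [x Jx <-]; exists x; split => //; apply/orbitP; exists n, 0%N.
by move=> Jz; exists (iter n.+1 f z); split => //; apply/orbitP; exists 0%N, n.+1.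
Qed.

Lemma J0_inj x y : J0 x -> J0 y -> orbit_rel f x y -> x = y.
Proof.
move=> Jx Jy /orbitP [m [n e]].
have [mn|mn] := eqVneq m n.
  by subst; exact: (iter_inj e).
have := hdisj (m := Posz m) (n := Posz n); rewrite eqz_nat mn => /(_ isT).
move=> /seteqP [+ _] => /(_ (iter m f x)) /=; case.
by split; [exists x | rewrite e; exists y].
Qed.

Lemma orbit_invariant (V : set S1) :
  (forall x y, orbit_rel f x y -> V x -> V y) <->
  (forall x y, orbit_rel f x y -> V x <-> V y).
Proof.
split=> h x y xy; last by move=> /(h _ _ xy).
split; first exact: h.
by apply: h; rewrite orbit_rel_sym.
Qed.

Lemma sat_all (V : set S1) : open V ->
  (forall x y, orbit_rel f x y -> V x -> V y) ->
  (exists c, Gamma c /\ V c) -> V = setT.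
Proof.
move=> oV inv [c [Gc Vc]].
have GV : Gamma `<=` V.
  move=> y Gy; have := dens Gy Gc; rewrite closureEnbhs => /(_ (zorbit f y) V).
  case => //; first exact: open_nbhs_nbhs.
  move=> z [[k _ ]]; case: k => n /=.
    by move=> [_ -> <-] Vz; apply: inv Vz; apply/orbitP; exists 0%N, n.
  by move=> <- Vz; apply: inv Vz; apply/orbitP; exists n.+1, 0%N.
apply/seteqP; split => // z _; apply: contrapT => nVz.
have nGz : ~ Gamma z by move=> /GV.
have [x [Jx xz]] := wand_J0 nGz.
have nVx : ~ V x by move=> /(inv _ _ xz).
have [q [_ clq]] := circle_compact (F := (fun n => iter n f x) @ \oo) _ filterT.
have [Gq|nGq] := pselect (Gamma q).
  have := clq [set iter n f x | n in [set: nat]] V.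
  case.
  - by exists 0%N => // n _; exists n.
  - by apply: open_nbhs_nbhs; split => //; exact: GV.
  move=> _ [[n _ <-] Vn]; apply: nVx; apply: (inv _ _ _ Vn).
  by apply/orbitP; exists 0%N, n.
have : (~` Gamma) q by [].
rewrite hunion => -[k _ zk].
have := clq [set iter n f x | n in [set n | (`|k| < n)%N]] (zimage f k J0).
case.
- by exists `|k|.+1 => // n /= kn; exists n.
- by apply: open_nbhs_nbhs; split => //; exact: open_zimage.
move=> _ [[n /= kn <-] zn].
have kn' : Posz n != k.
  apply/eqP => nk; move: kn; rewrite -nk /=; lia.
have := hdisj kn'; move=> /seteqP [+ _] => /(_ (iter n f x)) /=; case.
by split => //; exists x.
Qed.

Lemma sat_open (O : set S1) : open O ->
  open [set z | exists x, O x /\ orbit_rel f x z].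
Proof.
move=> oO; rewrite openE => z [x [Ox /orbitP [m [n e]]]].
pose psi := iter m g \o iter n f.
have pc : continuous psi by move=> w; apply: continuous_comp; apply: iter_cont.
have oP : open (psi @^-1` O) by apply: open_comp => // w _; exact: pc.
rewrite /interior; apply: (@filterS _ _ _ (psi @^-1` O)).
  move=> w /= Ow; exists (psi w); split => //; apply/orbitP; exists m, n.
  by rewrite /psi /= iterKV.
by move: oP; rewrite openE => /(_ z); apply; rewrite /= /psi /= -e iterK.
Qed.

Local Notation Y := (orbit_space f).
Local Notation proj := (Defs.proj f).

Lemma projE x y : proj x = proj y <-> orbit_rel f x y.
Proof.
split => [h|h]; first by apply/(@eqmodP _ (orbit_equiv f)).
exact/(@eqmodP _ (orbit_equiv f)).
Qed.

Lemma proj_repr (y : Y) : proj (repr y) = y.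
Proof. by rewrite /Defs.proj reprK. Qed.

Lemma openYE (U : set Y) : open U <-> open (proj @^-1` U).
Proof. by []. Qed.

Definition hv (h : End_delta f) : S1 -> S1 := set_val h.

Lemma delta_orbit (h : End_delta f) x y :
  orbit_rel f x y -> orbit_rel f (hv h x) (hv h y).
Proof. by have [_] := set_valP h; apply. Qed.

Lemma delta_cont (h : End_delta f) : continuous (hv h).
Proof. by have [] := set_valP h. Qed.

Lemma psi_proj (h : End_delta f) x : @Defs.psi R f (hv h) (proj x) = proj (hv h x).
Proof.
rewrite /Defs.psi; apply/projE; apply: delta_orbit; apply/projE.
by rewrite proj_repr.
Qed.

Lemma cont1 (h : End_delta f) : continuous (@Defs.psi R f (hv h)).
Proof.
apply/continuousP => A oA; apply/openYE.
have -> : proj @^-1` (@Defs.psi R f (hv h) @^-1` A) = hv h @^-1` (proj @^-1` A).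
  by apply/seteqP; split => x /=; rewrite psi_proj.
apply: open_comp => // x _; exact: delta_cont.
Qed.


Lemma compact_K (C : set Y) : compact C -> (forall y, C y -> ~ Gamma (repr y)) ->
  compact (J0 `&` proj @^-1` C).
Proof.
move=> cC hC F PF FK.
have GC : (proj @ F) C.
  by change (F (proj @^-1` C)); apply: (filterS _ FK) => x [].
have [y [Cy cly]] := cC _ _ GC.
have [x [Jx xr]] := wand_J0 (hC y Cy).
have pxy : proj x = y by rewrite -(proj_repr y); apply/projE.
exists x; split.
  by split => //; rewrite /= pxy.
move=> B N FB; rewrite nbhsE; move=> [P0 [oO Ox] ON].
pose O' := P0 `&` J0.
have oO' : open O' := openI oO oJ0.
have oP : open (proj @` O').
  apply/openYE.
  have -> : proj @^-1` (proj @` O') = [set z | exists x, O' x /\ orbit_rel f x z].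
    apply/seteqP; split => z /=.
      by move=> [ww Oo /projE e]; exists ww.
    by move=> [ww [Oo e]]; exists ww => //; apply/projE.
  exact: sat_open.
have := cly (proj @` (B `&` (J0 `&` proj @^-1` C))) (proj @` O').
case.
- change (F (proj @^-1` (proj @` (B `&` (J0 `&` proj @^-1` C))))).
  by apply: (filterS _ (filterI FB FK)) => z zB; exists z.
- by apply: open_nbhs_nbhs; split => //; exists x; [split|].
move=> _ [[b [Bb [Jb _]] <-] [ww [Oo Jo] /projE e]].
have bo : ww = b := J0_inj Jo Jb e.
by exists b; split => //; apply: ON; rewrite -bo.
Qed.

Lemma cont2 : continuous (@psi_map R f).
Proof.
move=> h.
have FF : Filter (@psi_map R f @ h).
  apply: fmap_filter; exact: nbhs_filter.
rewrite /continuous_at.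
have := @compact_open_cvgP (orbit_space f) (orbit_space f) _ (@psi_map R f h) FF.
move=> [_]; apply => C U cC oU hCU.
pose W := proj @^-1` U.
have oW : open W by [].
have Winv x y : orbit_rel f x y -> W x -> W y.
  by move=> /projE e; rewrite /W /= e.
have [K [cK hK gK']] : exists K : set S1, [/\ compact K, hv h @` K `<=` W &
    forall k : End_delta f, hv k @` K `<=` W -> @Defs.psi R f (hv k) @` C `<=` U].
  have [[y [Cy Gy]]|nG] := pselect (exists y, C y /\ Gamma (repr y)).
    exists [set repr y]; split; first exact: compact_set1.
      by move=> _ [_ -> <-]; apply: hCU; exists y.
    move=> k hg.
    have VT : (hv k @^-1` W) = setT.
      apply: sat_all.
      - by apply: open_comp => // z _; exact: delta_cont.
      - by move=> x z xz; apply: Winv; exact: delta_orbit.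
      by exists (repr y); split => //; apply: hg; exists (repr y).
    move=> _ [y' _ <-]; have : (hv k @^-1` W) (repr y') by rewrite VT.
    by [].
  have hC : forall y, C y -> ~ Gamma (repr y) by move=> y Cy Gy; apply: nG; exists y.
  exists (J0 `&` proj @^-1` C); split; first exact: compact_K.
    move=> _ [x [Jx Cx] <-]; rewrite /W /= -psi_proj; apply: hCU; by exists (proj x).
  move=> k hg _ [y Cy <-].
  have [x [Jx xr]] := wand_J0 (hC y Cy).
  have pxy : proj x = y by rewrite -(proj_repr y); apply/projE.
  have : W (hv k x) by apply: hg; exists x => //; split => //; rewrite /= pxy.
  by apply: Winv; apply: delta_orbit.
have sc : continuous (set_val : End_delta f -> {compact-open, S1 -> S1}).
  exact: initial_continuous.
have : nbhs (set_val h) ([set k | k @` K `<=` W] : set {compact-open, S1 -> S1}).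
  apply: open_nbhs_nbhs; split; first exact: compact_open_open.
  exact: hK.
move=> /sc H.
apply: (@filterS _ (nbhs h) _ ((set_val : End_delta f -> {compact-open, S1 -> S1}) @^-1` [set k : {compact-open, S1 -> S1} | k @` K `<=` W])); last exact: H.
move=> k /= kK; apply: gK'; exact: kK.
Qed.

Lemma not_comp (a b : R) : a < b -> b - a <= 1 -> J0 = cover @` `]a, b[ ->
  Gamma !=set0 -> ~ prop_COMP f.
Proof.
move=> hab hb1 hJ [c0 Gc0] HC.
pose c := a + (b - a) / 4; pose d := b - (b - a) / 4.
have ac : a < c by rewrite /c; lra.
have cd : c < d by rewrite /c /d; lra.
have db : d < b by rewrite /d; lra.
have dc1 : d - c < 1 by rewrite /c /d; lra.
pose L : set Y := [set proj c0] `|`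
  [set proj (cover t) | t in [set t | c < t < d /\ ~ rational t]].
have cL : compact L.
  move=> F PF FL; exists (proj c0); split; first by left.
  move=> A B FA; rewrite nbhsE; move=> [P0 [oP Pc] PB].
  have PT : proj @^-1` P0 = setT.
    apply: sat_all => //; first by move=> x z /projE e; rewrite /= e.
    by exists c0.
  have [y Ay] := filter_ex FA.
  exists y; split => //; apply: PB.
  have : (proj @^-1` P0) (repr y) by rewrite PT.
  by rewrite /= proj_repr.
have [K [cK KL]] := HC L cL.
have hK k : K k -> L (proj k) by move=> Kk; rewrite -KL; exists k.
have Jt t : c <= t <= d -> J0 (cover t).
  move=> /andP [ct td]; rewrite hJ; exists t => //; rewrite /= in_itv /=.
  apply/andP; split; lra.
have noRat t : c <= t <= d -> rational t -> forall m n,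
    ~ (iter n f @` K) (iter m f (cover t)).
  move=> tcd rt m n [k Kk e].
  have ot : orbit_rel f (cover t) k by apply/orbitP; exists m, n.
  case: (hK k Kk) => [/= pk | [s [/andP [s1 s2] s3] /projE ps]].
    have : orbit_rel f c0 (cover t).
      apply: (orbit_rel_trans (y := k)); first by apply/projE.
      by rewrite orbit_rel_sym.
    by move=> /orbit_gamma /(_ Gc0) /J0G; apply; apply: Jt.
  have st : orbit_rel f (cover s) (cover t).
    by apply: (orbit_rel_trans ps); rewrite orbit_rel_sym.
  have := J0_inj (Jt s _) (Jt t tcd) st.
  move=> /(_ _) /cover_eq.
  have -> : (c <= s <= d) by apply/andP; split; lra.
  move=> /(_ isT) /int_small h.
  have : s - t = 0.
    apply: h; rewrite ltr_norml; move: tcd => /andP [t1 t2]; apply/andP; split; lra.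
  by move=> /eqP; rewrite subr_eq0 => /eqP st'; apply: s3; rewrite st'.
pose Cset (p : nat * nat) := [set t | c <= t <= d /\ (iter p.2 f @` K) (iter p.1 f (cover t))].
have cC p : closed (Cset p).
  have -> : Cset p = `[c, d] `&` ((iter p.1 f \o cover) @^-1` (iter p.2 f @` K)).
    by apply/seteqP; split => t /=; rewrite in_itv /=.
  apply: closedI; first exact: itv_closed.
  apply: preimage_closed.
    move=> t _; apply: continuous_comp; [exact: cover_cont | exact: iter_cont].
  apply: compact_closed; first exact: circle_hausdorff.
  apply: continuous_compact => //; apply: continuous_subspaceT; exact: iter_cont.
pose Cn (n : nat) := if unpickle n is Some p then Cset p else set0.
have cCn n : closed (Cn n) by rewrite /Cn; case: (unpickle n) => [p|] //; exact: closed0.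
have [B oB irrB] := @irrational_Gdelta R.
pose D n := ~` Cn n `&` B n.
have oD n : open (D n) /\ dense (D n).
  have oC : open (~` Cn n) by rewrite openC.
  split; first exact: openI oC (oB n).1.
  apply: denseI => //; last exact: (oB n).2.
  move=> O O0 oO; have [r [Or [q _ qr]]] := dense_rat O0 oO.
  exists r; split => //; rewrite /Cn; case: (unpickle n) => [[m k]|] //.
  move=> [rcd]; apply: noRat rcd _ _ _ => //; by exists q.
have := Baire oD (O := `]c, d[%classic) _ (@itv_open _ _ c d).
case.
  exists ((c + d) / 2); rewrite /= in_itv /=; apply/andP; split; lra.
move=> t [tcd tD].
have irt : ~ rational t.
  have : (\bigcap_i B i) t by move=> i _; exact: (tD i I).2.
  by rewrite -irrB.
have Lt : L (proj (cover t)) by right; exists t.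
move: Lt; rewrite -KL => -[k Kk /projE /orbitP [m [n e]]].
have tc : Cset (n, m) t.
  split; first by move: tcd; rewrite /= in_itv /= => /andP [? ?]; apply/andP; split; lra.
  by exists k.
have := (tD (pickle (n, m)) I).1; apply; rewrite /Cn pickleK; exact: tc.
Qed.
End dyn.

Theorem mainTheorem14 (R : realType) (f : circle R -> circle R) :
  denjoy f -> prop_CONT f /\ ~ prop_COMP f.
Proof.
move=> [[[g [fK gK fc gc]] _] _ [Gamma [[Gne _ _ _] _ fG dens
  [J0 [[a [b [hab hb1 hJ]]] hun hdisj]]]]].
have oJ0 : open J0 by rewrite hJ; apply: open_cover; exact: itv_open.
split; last exact: (not_comp fK gK fc gc fG oJ0 hun hdisj dens hab hb1 hJ Gne).
split; first by move=> h; exact: cont1.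
exact: (cont2 fK gK fc gc oJ0 hun hdisj dens).
Qed.
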